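(* For every integer $d\ge 1$ there exist infinite families $\mathcal A$ and $\mathcal B$ of closed convex sets in $\mathbb R^d$ such that $\pi(\mathcal A)=\infty$, every member of $\mathcal B$ is bounded, and the family $\mathcal F=\mathcal A\cup\mathcal B$ satisfies the $(d+2k,d+k)$-property for every integer $k\ge 0$.
   Context: A family of at least $p$ sets satisfies the $(p,q)$-property if among any $p$ of its members there are $q$ with a common point. The piercing number $\pi(\mathcal A)$ is the minimum cardinality of a set of points meeting every member of $\mathcal A$, and $\pi(\mathcal A)=\infty$ if no finite such set exists. *)

(* Defs.v *)
From Stdlib Require Fin.
From Stdlib Require Import Reals List.
Import ListNotations.
Open Scope R_scope.

Definition point (d : nat) : Type := Fin.t d -> R.

Definition rset (d : nat) : Type := point d -> Prop.

Definition setfam (d : nat) : Type := rset d -> Prop.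

Definition same_set {d : nat} (S T : rset d) : Prop := forall x, S x <-> T x.

(* Closedness w.r.t. the (sup-)metric topology of R^d (equivalent to the
   Euclidean topology). *)
Definition is_closed {d : nat} (S : rset d) : Prop :=
  forall x : point d,
    (forall eps : R, 0 < eps ->
       exists y, S y /\ forall i, Rabs (x i - y i) < eps) ->
    S x.

Definition is_convex {d : nat} (S : rset d) : Prop :=
  forall (x y : point d) (t : R), 0 <= t <= 1 -> S x -> S y ->
    S (fun i => t * x i + (1 - t) * y i).

Definition is_bounded {d : nat} (S : rset d) : Prop :=
  exists M : R, forall x, S x -> forall i, Rabs (x i) <= M.

Fixpoint pw_distinct {d : nat} (L : list (rset d)) : Prop :=
  match L with
  | [] => True
  | X :: L0 => Forall (fun T => ~ same_set X T) L0 /\ pw_distinct L0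
  end.

Definition members {d : nat} (F : setfam d) (L : list (rset d)) : Prop :=
  Forall F L /\ pw_distinct L.

Definition infinite_family {d : nat} (F : setfam d) : Prop :=
  forall n : nat, exists L, members F L /\ length L = n.

Definition common_point {d : nat} (L : list (rset d)) : Prop :=
  exists x : point d, Forall (fun S => S x) L.

Definition pq_property {d : nat} (p q : nat) (F : setfam d) : Prop :=
  (exists L, members F L /\ length L = p) /\
  forall L, members F L -> length L = p ->
    exists M, incl M L /\ pw_distinct M /\ length M = q /\ common_point M.

Definition finitely_pierceable {d : nat} (F : setfam d) : Prop :=
  exists P : list (point d), forall S, F S -> exists x, In x P /\ S x.

Definition piercing_infinite {d : nat} (F : setfam d) : Prop :=
  ~ finitely_pierceable F.

Definition setfam_union {d : nat} (A B : setfam d) : setfam d :=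
  fun S => A S \/ B S.

(* Main.v *)
Require Import Defs.
From Stdlib Require Import Reals List.
From Stdlib Require Import Lra Lia Classical Arith ZArith.
Import ListNotations.

Section Helpers.
Local Open Scope R_scope.

Fixpoint G (c : nat -> R) (k : nat) (s : R) : R :=
  match k with
  | O => c O
  | S k' => s * G (fun i => c (S i)) k' s + c O
  end.

Lemma G_ext : forall k c c' s, (forall i, (i <= k)%nat -> c i = c' i) -> G c k s = G c' k s.
Proof.
  induction k; intros c c' s H; simpl.
  - apply H; lia.
  - rewrite (IHk (fun i => c (S i)) (fun i => c' (S i))).
    + rewrite (H 0%nat) by lia. reflexivity.
    + intros; apply H; lia.
Qed.

Lemma G_at0 : forall k c, G c k 0 = c O.
Proof. destruct k; intros; simpl; [reflexivity| ring]. Qed.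

Lemma G_lin : forall k c c' a b s,
  G (fun i => a * c i + b * c' i) k s = a * G c k s + b * G c' k s.
Proof.
  induction k; intros; simpl. ring.
  specialize (IHk (fun i => c (S i)) (fun i => c' (S i)) a b s). cbv beta in IHk.
  rewrite IHk. ring.
Qed.

Lemma G_scale : forall k c a s, G (fun i => a * c i) k s = a * G c k s.
Proof.
  induction k; intros; simpl. ring.
  specialize (IHk (fun i => c (S i)) a s). cbv beta in IHk.
  rewrite IHk. ring.
Qed.

Lemma G_zero : forall k c s, (forall i, c i = 0) -> G c k s = 0.
Proof.
  induction k; intros c s H; simpl. apply H.
  rewrite IHk by (intros; apply H). rewrite H. ring.
Qed.

Lemma G_e0 : forall k c s, c O = 1 -> (forall i, c (S i) = 0) -> G c k s = 1.
Proof.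
  destruct k; intros c s H0 H; simpl. exact H0.
  rewrite G_zero by (intros; apply H). rewrite H0. ring.
Qed.

Lemma G_factor : forall k c a, exists c', forall s,
  G c (S k) s - G c (S k) a = (s - a) * G c' k s.
Proof.
  induction k; intros c a.
  - exists (fun _ => c 1%nat). intros s. simpl. ring.
  - destruct (IHk (fun i => c (S i)) a) as [c'' Hc''].
    exists (fun i => match i with O => G (fun i => c (S i)) (S k) a | S i => c'' i end).
    intros s.
    assert (E1: G c (S (S k)) s = s * G (fun i => c (S i)) (S k) s + c O) by reflexivity.
    assert (E2: G c (S (S k)) a = a * G (fun i => c (S i)) (S k) a + c O) by reflexivity.
    assert (E3: G (fun i => match i with O => G (fun i => c (S i)) (S k) a | S i => c'' i end) (S k) s
               = s * G c'' k s + G (fun i => c (S i)) (S k) a) by reflexivity.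
    rewrite E1, E2, E3.
    specialize (Hc'' s).
    set (g := G (fun i => c (S i)) (S k)) in *.
    replace (g s) with (g a + (s - a) * G c'' k s) by lra. ring.
Qed.

Lemma G_mul : forall k c b, exists c', c' O = c O /\
  (forall i, Rabs (c' (S i)) <= Rabs (c (S i)) + Rabs b * Rabs (c i)) /\
  forall s, (1 - b * s) * G c k s = G c' (S k) s.
Proof.
  induction k; intros c b.
  - exists (fun i => match i with O => c O | 1%nat => - b * c O | _ => 0 end).
    split; [reflexivity|]. split.
    + intros [|i].
      * rewrite Ropp_mult_distr_l_reverse, Rabs_Ropp, Rabs_mult.
        pose proof (Rabs_pos (c 1%nat)). lra.
      * rewrite Rabs_R0. pose proof (Rabs_pos (c (S (S i)))).
        pose proof (Rabs_pos b). pose proof (Rabs_pos (c (S i))).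
        pose proof (Rmult_le_pos _ _ H0 H1). lra.
    + intros s. simpl. ring.
  - destruct (IHk (fun i => c (S i)) b) as [c'' [H0 [Hb Hs]]].
    exists (fun i => match i with O => c O | S O => c'' O - b * c O | S i => c'' i end).
    split; [reflexivity|]. split.
    + intros [|i].
      * rewrite H0. unfold Rminus. eapply Rle_trans. apply Rabs_triang.
        rewrite Rabs_Ropp, Rabs_mult. lra.
      * apply (Hb i).
    + intros s.
      assert (E: G (fun i => match i with O => c O | S O => c'' O - b * c O | S i => c'' i end) (S (S k)) s
                 = s * (G c'' (S k) s - b * c O) + c O).
      { simpl. ring. }
      rewrite E, <- Hs. simpl. ring.
Qed.

End Helpers.

Section H2.
Local Open Scope R_scope.

Lemma pow2_ge1 : forall n, 1 <= 2 ^ n.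
Proof. intros; apply pow_R1_Rle; lra. Qed.

Lemma roots_poly : forall ns : list nat, exists c, c O = 1 /\
  (forall i, Rabs (c i) <= 2 ^ length ns) /\
  forall n, In n ns -> G c (length ns) (2 ^ n) = 0.
Proof.
  induction ns as [|n ns IH].
  - exists (fun i => match i with O => 1 | _ => 0 end). split; [reflexivity|]. split.
    + intros [|i]; simpl; rewrite ?Rabs_R1, ?Rabs_R0; lra.
    + intros n [].
  - destruct IH as [c [H0 [Hb Hr]]].
    destruct (G_mul (length ns) c (/ 2 ^ n)) as [c' [H0' [Hb' Hs]]].
    exists c'. split; [congruence|]. split.
    + assert (Hi : Rabs (/ 2 ^ n) <= 1).
      { pose proof (pow2_ge1 n). rewrite Rabs_pos_eq.
        - rewrite <- Rinv_1. apply Rinv_le_contravar; lra.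
        - left; apply Rinv_0_lt_compat; lra. }
      simpl length. simpl pow.
      intros [|i].
      * rewrite H0', H0, Rabs_R1. pose proof (pow2_ge1 (length ns)). lra.
      * eapply Rle_trans. apply Hb'. pose proof (Hb (S i)). pose proof (Hb i).
        pose proof (Rabs_pos (c i)). pose proof (Rabs_pos (/ 2 ^ n)).
        assert (Rabs (/ 2 ^ n) * Rabs (c i) <= 1 * 2 ^ length ns).
        { apply Rmult_le_compat; lra. }
        lra.
    + intros m Hm. simpl length. rewrite <- Hs. destruct Hm as [<-|Hm].
      * rewrite Rinv_l. ring. apply pow_nonzero; lra.
      * rewrite Hr by exact Hm. ring.
Qed.

Definition trunc (c : nat -> R) (r : nat) : nat -> R :=
  fun i => if Nat.leb i r then c i else 0.

Lemma pad1 : forall k c c' s, (forall i, (i <= k)%nat -> c' i = c i) -> c' (S k) = 0 ->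
  G c' (S k) s = G c k s.
Proof.
  induction k; intros c c' s H H1.
  - simpl. rewrite H1, H by lia. ring.
  - change (G c' (S (S k)) s) with (s * G (fun i => c' (S i)) (S k) s + c' O).
    change (G c (S k) s) with (s * G (fun i => c (S i)) k s + c O).
    rewrite (IHk (fun i => c (S i))).
    + rewrite H by lia. reflexivity.
    + intros; apply H; lia.
    + exact H1.
Qed.

Lemma pad : forall r j c s, G (trunc c r) (r + j) s = G c r s.
Proof.
  intros r j c s. induction j.
  - rewrite Nat.add_0_r. apply G_ext. intros i Hi. unfold trunc.
    rewrite (proj2 (Nat.leb_le i r) Hi). reflexivity.
  - rewrite Nat.add_succ_r. rewrite pad1 with (c := trunc c r). exact IHj.
    intros; reflexivity.
    unfold trunc. rewrite (proj2 (Nat.leb_gt _ _)) by lia. reflexivity.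
Qed.

Lemma G_lip : forall k s, exists L, 0 <= L /\ forall c c' e, 0 <= e ->
  (forall i, Rabs (c i - c' i) <= e) -> Rabs (G c k s - G c' k s) <= L * e.
Proof.
  induction k; intros s.
  - exists 1. split; [lra|]. intros c c' e He H. simpl. rewrite Rmult_1_l. apply H.
  - destruct (IHk s) as [L [HL H]]. exists (Rabs s * L + 1). split.
    { pose proof (Rabs_pos s). pose proof (Rmult_le_pos _ _ H0 HL). lra. }
    intros c c' e He Hc. simpl.
    replace (s * G (fun i => c (S i)) k s + c 0%nat - (s * G (fun i => c' (S i)) k s + c' 0%nat))
      with (s * (G (fun i => c (S i)) k s - G (fun i => c' (S i)) k s) + (c 0%nat - c' 0%nat)) by ring.
    eapply Rle_trans. apply Rabs_triang. rewrite Rabs_mult.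
    assert (Rabs s * Rabs (G (fun i => c (S i)) k s - G (fun i => c' (S i)) k s) <= Rabs s * (L * e)).
    { apply Rmult_le_compat_l. apply Rabs_pos. apply H. exact He. intros; apply Hc. }
    pose proof (Hc 0%nat). nra.
Qed.

Fixpoint dbl (L : list R) : Prop :=
  match L with
  | [] => True
  | a :: L' => Forall (fun b => 0 < b /\ 2 * b <= a) L' /\ dbl L'
  end.

Lemma small : forall m c L, c O = 1 -> length L = S m -> dbl L -> (forall a, In a L -> 0 < a) ->
  exists a, In a L /\ / 8 ^ m <= Rabs (G c m a).
Proof.
  induction m; intros c L H0 HL HD Hp.
  - destruct L as [|a [|]]; simpl in HL; try discriminate.
    exists a. split; [left; reflexivity|]. simpl. rewrite H0, Rabs_R1. lra.
  - destruct L as [|a rest]; simpl in HL; try discriminate. injection HL as HL.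
    destruct HD as [HF HD].
    assert (Ha : 0 < a) by (apply Hp; left; reflexivity).
    set (q := G c (S m)).
    set (eps := / 8 ^ S m).
    assert (He8 : / 8 ^ m = 8 * eps).
    { unfold eps. simpl. field. apply pow_nonzero; lra. }
    assert (Heps : 0 < eps) by (unfold eps; apply Rinv_0_lt_compat, pow_lt; lra).
    assert (Heps2 : eps <= / 8).
    { unfold eps. apply Rinv_le_contravar. lra. simpl. pose proof (pow_R1_Rle 8 m ltac:(lra)). lra. }
    destruct (Rle_lt_dec eps (Rabs (q a))) as [Hq|Hq].
    { exists a. split; [left; reflexivity| exact Hq]. }
    destruct (G_factor m c a) as [c' Hf].
    set (u := 1 - q a).
    assert (Hu : 1/2 <= Rabs u).
    { unfold u. pose proof (Rabs_triang_inv 1 (q a)). rewrite Rabs_R1 in H. lra. }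
    assert (Hu0 : u <> 0) by (intro E; rewrite E, Rabs_R0 in Hu; lra).
    assert (Hc0 : u = - a * c' O).
    { pose proof (Hf 0). unfold q in *. rewrite !G_at0 in H. unfold u, q. rewrite H0 in H. lra. }
    destruct (IHm (fun i => (- a / u) * c' i) rest) as [b [Hb Hbig]].
    { cbv beta. replace (- a / u * c' O) with ((- a * c' O) / u) by (field; exact Hu0). rewrite <- Hc0. field. exact Hu0. }
    { exact HL. }
    { exact HD. }
    { intros; apply Hp; right; assumption. }
    rewrite G_scale in Hbig.
    exists b. split; [right; exact Hb|].
    rewrite Forall_forall in HF. destruct (HF b Hb) as [Hb0 Hb2].
    pose proof (Hf b) as Hfb. fold q in Hfb.
    set (g := G c' m b) in *.
    assert (Hdiff : q b - q a = (a - b) / a * u * ((- a / u) * g)).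
    { rewrite Hfb. field. split; lra. }
    assert (Habs : Rabs (q b - q a) = (a - b) / a * Rabs u * Rabs (- a / u * g)).
    { rewrite Hdiff, !Rabs_mult. rewrite (Rabs_pos_eq ((a - b) / a)). reflexivity.
      unfold Rdiv; apply Rmult_le_pos; [lra| left; apply Rinv_0_lt_compat; lra]. }
    assert (Hab : 1/2 <= (a - b) / a).
    { apply Rmult_le_reg_r with a; [lra|]. replace ((a - b) / a * a) with (a - b) by (field; lra). lra. }
    assert (Hprod : 2 * eps <= (a - b) / a * Rabs u * Rabs (- a / u * g)).
    { replace (2 * eps) with (1/2 * (1/2) * (8 * eps)) by field.
      apply Rmult_le_compat. lra. lra.
      apply Rmult_le_compat; lra. lra. }
    pose proof (Rabs_triang (q b) (- q a)) as H1. rewrite Rabs_Ropp in H1.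
    unfold Rminus in Habs. lra.
Qed.

End H2.

Section H3.
Local Open Scope R_scope.

Definition coord {d : nat} (x : point d) (j : nat) : R :=
  match lt_dec j d with left h => x (Fin.of_nat_lt h) | right _ => 0 end.

Definition mkpt (d : nat) (f : nat -> R) : point d :=
  fun i => f (proj1_sig (Fin.to_nat i)).

Lemma coord_mkpt : forall d f j, (j < d)%nat -> coord (mkpt d f) j = f j.
Proof.
  intros d f j H. unfold coord, mkpt. destruct (lt_dec j d); [|lia].
  rewrite Fin.to_nat_of_nat. reflexivity.
Qed.

Definition cx {d : nat} (x : point d) : nat -> R :=
  fun j => match j with O => 1 | S j => - coord x j end.

Definition Q {d : nat} (x : point d) (s : R) : R := G (cx x) (pred d) s.

Definition Aset (d n : nat) : rset d :=
  fun x => (INR n + 1) * Rabs (Q x (2 ^ n)) <= coord x (pred d).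

Definition Bset (d k : nat) : rset d :=
  fun x => forall i, Rabs (x i) <= 2 ^ (pred d) + INR k.

Definition tall (d : nat) (Y : R) : point d :=
  mkpt d (fun j => if Nat.eqb j (pred d) then Y else 0).

Lemma Q_tall : forall d Y s, Q (tall d Y) s = 1.
Proof.
  intros d Y s. unfold Q. rewrite G_ext with (c' := fun i => match i with O => 1 | _ => 0 end).
  - apply G_e0; reflexivity.
  - intros [|i] Hi; [reflexivity|]. unfold cx, tall. rewrite coord_mkpt by lia.
    rewrite (proj2 (Nat.eqb_neq i (pred d))) by lia. ring.
Qed.

Lemma tall_y : forall d Y, (1 <= d)%nat -> coord (tall d Y) (pred d) = Y.
Proof.
  intros. unfold tall. rewrite coord_mkpt by lia. rewrite Nat.eqb_refl. reflexivity.
Qed.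

Lemma tall_in_A : forall d n Y, (1 <= d)%nat -> INR n + 1 <= Y -> Aset d n (tall d Y).
Proof.
  intros. unfold Aset. rewrite Q_tall, tall_y, Rabs_R1 by assumption. lra.
Qed.

Lemma A_ne : forall d i j, (1 <= d)%nat -> (i < j)%nat -> ~ same_set (Aset d i) (Aset d j).
Proof.
  intros d i j Hd Hij Hs. pose proof (proj1 (Hs (tall d (INR i + 1))) (tall_in_A d i _ Hd (Rle_refl _))).
  unfold Aset in H. rewrite Q_tall, tall_y, Rabs_R1 in H by assumption.
  apply lt_INR in Hij. lra.
Qed.

Lemma pred_lt : forall d, (1 <= d)%nat -> (pred d < d)%nat.
Proof. intros; lia. Qed.

Definition fin_m (d : nat) (Hd : (1 <= d)%nat) : Fin.t d :=
  Fin.of_nat_lt (pred_lt d Hd).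

Lemma B_ne : forall d i j, (1 <= d)%nat -> (i < j)%nat -> ~ same_set (Bset d i) (Bset d j).
Proof.
  intros d i j Hd Hij Hs.
  assert (Hin : Bset d j (fun _ => 2 ^ pred d + INR j)).
  { intros k. rewrite Rabs_pos_eq. lra. pose proof (pow2_ge1 (pred d)). pose proof (pos_INR j). lra. }
  apply Hs in Hin. specialize (Hin (fin_m d Hd)). cbv beta in Hin.
  rewrite Rabs_pos_eq in Hin. apply lt_INR in Hij. lra.
  pose proof (pow2_ge1 (pred d)). pose proof (pos_INR j). lra.
Qed.

Lemma AB_ne : forall d n k, (1 <= d)%nat -> ~ same_set (Aset d n) (Bset d k).
Proof.
  intros d n k Hd Hs.
  set (Y := INR n + 1 + 2 ^ pred d + INR k + 1).
  assert (HA : Aset d n (tall d Y)).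
  { apply tall_in_A; auto. unfold Y. pose proof (pow2_ge1 (pred d)). pose proof (pos_INR k). lra. }
  apply Hs in HA. specialize (HA (fin_m d Hd)).
  unfold tall, mkpt, fin_m in HA. rewrite Fin.to_nat_of_nat in HA. simpl in HA.
  rewrite Nat.eqb_refl in HA. unfold Y in HA. rewrite Rabs_pos_eq in HA.
  pose proof (pos_INR n). lra.
  pose proof (pow2_ge1 (pred d)). pose proof (pos_INR k). pose proof (pos_INR n). lra.
Qed.

Lemma A_closed : forall d n, is_closed (Aset d n).
Proof.
  intros d n x Hx. unfold Aset.
  destruct (Rle_lt_dec ((INR n + 1) * Rabs (Q x (2 ^ n))) (coord x (pred d))) as [H|H]; [exact H|].
  exfalso. set (W := INR n + 1) in *. set (del := W * Rabs (Q x (2 ^ n)) - coord x (pred d)).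
  assert (Hdel : 0 < del) by (unfold del; lra).
  assert (HW : 0 < W) by (unfold W; pose proof (pos_INR n); lra).
  destruct (G_lip (pred d) (2 ^ n)) as [L [HL HLip]].
  set (e := del / (2 * (1 + W * L))).
  assert (HWL : 0 <= W * L) by (apply Rmult_le_pos; lra).
  assert (He : 0 < e) by (unfold e; apply Rdiv_lt_0_compat; lra).
  destruct (Hx e He) as [y [Hy Hxy]].
  assert (Hc : forall j, Rabs (coord x j - coord y j) <= e).
  { intros j. unfold coord. destruct (lt_dec j d). left; apply Hxy.
    rewrite Rminus_0_r, Rabs_R0. lra. }
  assert (HQ : Rabs (Q x (2 ^ n) - Q y (2 ^ n)) <= L * e).
  { apply HLip. lra. intros [|i]; simpl. replace (1 - 1) with 0 by ring. rewrite Rabs_R0. lra.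
    assert (E : - coord x i - - coord y i = - (coord x i - coord y i)) by ring. rewrite E, Rabs_Ropp. apply Hc. }
  unfold Aset in Hy. fold W in Hy.
  pose proof (Rabs_triang (Q y (2 ^ n)) (Q x (2 ^ n) - Q y (2 ^ n))) as Ht.
  replace (Q y (2 ^ n) + (Q x (2 ^ n) - Q y (2 ^ n))) with (Q x (2 ^ n)) in Ht by ring.
  assert (Ht2 : W * Rabs (Q x (2 ^ n)) <= W * Rabs (Q y (2 ^ n)) + W * L * e).
  { rewrite Rmult_assoc, <- Rmult_plus_distr_l. apply Rmult_le_compat_l; lra. }
  pose proof (Hc (pred d)) as Hcy.
  pose proof (Rle_abs (coord y (pred d) - coord x (pred d))) as Hab.
  rewrite Rabs_minus_sym in Hab.
  assert (Hee : e * (1 + W * L) = del / 2) by (unfold e; field; lra).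
  unfold del in *. nra.
Qed.

Lemma coord_comb : forall d (x y : point d) t j,
  coord (fun i => t * x i + (1 - t) * y i) j = t * coord x j + (1 - t) * coord y j.
Proof. intros. unfold coord. destruct (lt_dec j d); [reflexivity| ring]. Qed.

Lemma A_convex : forall d n, is_convex (Aset d n).
Proof.
  intros d n x y t Ht Hx Hy. unfold Aset in *.
  rewrite coord_comb.
  assert (HQ : Q (fun i => t * x i + (1 - t) * y i) (2 ^ n) = t * Q x (2 ^ n) + (1 - t) * Q y (2 ^ n)).
  { unfold Q. rewrite <- G_lin. apply G_ext. intros [|i] _; unfold cx; [ring|].
    rewrite coord_comb. ring. }
  rewrite HQ. set (W := INR n + 1) in *.
  assert (HW : 0 <= W) by (unfold W; pose proof (pos_INR n); lra).
  assert (Htri : Rabs (t * Q x (2 ^ n) + (1 - t) * Q y (2 ^ n)) <= t * Rabs (Q x (2 ^ n)) + (1 - t) * Rabs (Q y (2 ^ n))).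
  { eapply Rle_trans. apply Rabs_triang. rewrite !Rabs_mult, (Rabs_pos_eq t), (Rabs_pos_eq (1 - t)) by lra. lra. }
  apply Rmult_le_compat_l with (r := W) in Htri; [|exact HW].
  assert (t * (W * Rabs (Q x (2 ^ n))) <= t * coord x (pred d)) by (apply Rmult_le_compat_l; lra).
  assert ((1 - t) * (W * Rabs (Q y (2 ^ n))) <= (1 - t) * coord y (pred d)) by (apply Rmult_le_compat_l; lra).
  nra.
Qed.

Lemma B_closed : forall d k, is_closed (Bset d k).
Proof.
  intros d k x Hx i.
  destruct (Rle_lt_dec (Rabs (x i)) (2 ^ pred d + INR k)) as [H|H]; [exact H|]. exfalso.
  destruct (Hx (Rabs (x i) - (2 ^ pred d + INR k))) as [y [Hy Hxy]]. lra.
  specialize (Hy i). specialize (Hxy i).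
  pose proof (Rabs_triang (y i) (x i - y i)). replace (y i + (x i - y i)) with (x i) in H0 by ring.
  lra.
Qed.

Lemma B_convex : forall d k, is_convex (Bset d k).
Proof.
  intros d k x y t Ht Hx Hy i. specialize (Hx i). specialize (Hy i).
  eapply Rle_trans. apply Rabs_triang. rewrite !Rabs_mult, (Rabs_pos_eq t), (Rabs_pos_eq (1 - t)) by lra.
  assert (t * Rabs (x i) <= t * (2 ^ pred d + INR k)) by (apply Rmult_le_compat_l; lra).
  assert ((1 - t) * Rabs (y i) <= (1 - t) * (2 ^ pred d + INR k)) by (apply Rmult_le_compat_l; lra).
  lra.
Qed.

Lemma B_bounded : forall d k, is_bounded (Bset d k).
Proof. intros d k. exists (2 ^ pred d + INR k). intros x Hx i. apply Hx. Qed.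

End H3.

Section H4.
Local Open Scope R_scope.

Definition Afam (d : nat) : setfam d := fun S => exists n, S = Aset d n.
Definition Bfam (d : nat) : setfam d := fun S => exists k, S = Bset d k.

Lemma vdm : forall d (ns : list nat), (length ns <= pred d)%nat ->
  exists x : point d, (forall n, In n ns -> Aset d n x) /\ (forall k, Bset d k x).
Proof.
  intros d ns Hlen.
  destruct (roots_poly ns) as [c [H0 [Hb Hr]]].
  set (r := length ns) in *.
  set (f := fun j => if Nat.ltb j (pred d) then - trunc c r (S j) else 0).
  exists (mkpt d f). split.
  - intros n Hn. unfold Aset.
    assert (HQ : Q (mkpt d f) (2 ^ n) = 0).
    { unfold Q. rewrite G_ext with (c' := trunc c r).
      - replace (pred d) with (r + (pred d - r))%nat by lia. rewrite pad. apply Hr. exact Hn.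
      - intros [|i] Hi; unfold cx.
        + unfold trunc. simpl. symmetry. exact H0.
        + rewrite coord_mkpt by lia. unfold f. rewrite (proj2 (Nat.ltb_lt i (pred d))) by lia. ring. }
    rewrite HQ, Rabs_R0, Rmult_0_r.
    unfold coord. destruct (lt_dec (pred d) d).
    + unfold mkpt. rewrite Fin.to_nat_of_nat. simpl. unfold f. rewrite Nat.ltb_irrefl. lra.
    + lra.
  - intros k i. unfold mkpt, f. pose proof (pos_INR k).
    assert (2 ^ r <= 2 ^ pred d) by (apply Rle_pow; [lra|lia]).
    destruct (Nat.ltb _ _).
    + rewrite Rabs_Ropp. unfold trunc. destruct (Nat.leb _ _).
      * pose proof (Hb (S (proj1_sig (Fin.to_nat i)))). lra.
      * rewrite Rabs_R0. pose proof (pow2_ge1 (pred d)). lra.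
    + rewrite Rabs_R0. pose proof (pow2_ge1 (pred d)). lra.
Qed.

Lemma idxA : forall d (M : list (rset d)), Forall (Afam d) M ->
  exists ns, length ns = length M /\ forall S, In S M -> exists n, In n ns /\ S = Aset d n.
Proof.
  intros d M H. induction H as [|S M [n Hn] HM IH].
  - exists []. split; [reflexivity| intros S []].
  - destruct IH as [ns [Hl Hi]]. exists (n :: ns). split; [simpl; congruence|].
    intros T [<-|HT]. exists n. split; [left; reflexivity| exact Hn].
    destruct (Hi T HT) as [m [Hm E]]. exists m. split; [right; exact Hm| exact E].
Qed.

Lemma bound_list : forall ns : list nat, exists Y, forall n, In n ns -> INR n + 1 <= Y.
Proof.
  induction ns as [|n ns [Y HY]].
  - exists 0. intros n [].
  - exists (Rmax (INR n + 1) Y). intros m [<-|Hm].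
    + apply Rmax_l.
    + eapply Rle_trans; [apply HY; exact Hm| apply Rmax_r].
Qed.

Lemma cp_A : forall d M, (1 <= d)%nat -> Forall (Afam d) M -> common_point M.
Proof.
  intros d M Hd HM. destruct (idxA d M HM) as [ns [_ Hi]].
  destruct (bound_list ns) as [Y HY].
  exists (tall d Y). apply Forall_forall. intros S HS.
  destruct (Hi S HS) as [n [Hn ->]]. apply tall_in_A; auto.
Qed.

Lemma cp_B : forall d M, Forall (Bfam d) M -> common_point M.
Proof.
  intros d M HM. exists (fun _ => 0). apply Forall_forall. intros S HS.
  rewrite Forall_forall in HM. destruct (HM S HS) as [k ->]. intros i.
  rewrite Rabs_R0. pose proof (pow2_ge1 (pred d)). pose proof (pos_INR k). lra.
Qed.

Lemma cp_mix : forall d M1 M2, Forall (Afam d) M1 -> (length M1 <= pred d)%nat ->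
  Forall (Bfam d) M2 -> common_point (M1 ++ M2).
Proof.
  intros d M1 M2 H1 Hl H2. destruct (idxA d M1 H1) as [ns [Hns Hi]].
  destruct (vdm d ns ltac:(lia)) as [x [HA HB]].
  exists x. apply Forall_forall. intros S HS. apply in_app_or in HS as [HS|HS].
  - destruct (Hi S HS) as [n [Hn ->]]. apply HA; exact Hn.
  - rewrite Forall_forall in H2. destruct (H2 S HS) as [k ->]. apply HB.
Qed.

Fixpoint decr (l : list nat) : Prop :=
  match l with [] => True | a :: l' => Forall (fun b => (b < a)%nat) l' /\ decr l' end.

Lemma build : forall (Pn : nat -> Prop) M, (forall N, exists n, (N <= n)%nat /\ Pn n) ->
  forall k, exists ns, length ns = k /\ (forall n, In n ns -> (M <= n)%nat /\ Pn n) /\ decr ns.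
Proof.
  intros Pn M HP k. induction k as [|k [ns [Hl [Hi Hd]]]].
  - exists []. split; [reflexivity|]. split; [intros ? []| exact I].
  - destruct (HP (S (list_max ns) + M)%nat) as [n [Hn HPn]].
    exists (n :: ns). split; [simpl; congruence|]. split.
    + intros m [<-|Hm]. split; [lia| exact HPn]. apply Hi; exact Hm.
    + split; [|exact Hd]. apply Forall_forall. intros b Hb.
      assert (Hmax := proj1 (list_max_le ns (list_max ns)) (le_n _)).
      rewrite Forall_forall in Hmax. specialize (Hmax b Hb). lia.
Qed.

Lemma decr_dbl : forall ns, decr ns -> dbl (map (fun n => 2 ^ n) ns).
Proof.
  induction ns as [|a ns IH]; simpl; [tauto|]. intros [HF Hd]. split; [|apply IH; exact Hd].
  apply Forall_forall. intros b Hb. apply in_map_iff in Hb as [n [<- Hn]].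
  rewrite Forall_forall in HF. specialize (HF n Hn). split.
  - apply pow_lt; lra.
  - change (2 * 2 ^ n) with (2 ^ S n). apply Rle_pow; [lra| lia].
Qed.

Lemma nat_unbounded : forall r : R, exists M : nat, r < INR M.
Proof.
  intros r. destruct (Rlt_le_dec r 0) as [H|H].
  - exists 0%nat. simpl. exact H.
  - destruct (archimed r) as [H1 _].
    assert (Hz : (0 <= up r)%Z). { apply le_IZR. lra. }
    exists (Z.to_nat (up r)). rewrite INR_IZR_INZ, Z2Nat.id by exact Hz. exact H1.
Qed.

Lemma point_escape : forall d (x : point d), exists N, forall n, (N <= n)%nat -> ~ Aset d n x.
Proof.
  intros d x. destruct (classic (exists N, forall n, (N <= n)%nat -> ~ Aset d n x)) as [H|Hn]; [exact H|].
  exfalso.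
  assert (Hinf : forall N, exists n, (N <= n)%nat /\ Aset d n x).
  { intros N. apply NNPP. intro Hc. apply Hn. exists N. intros n Hn' HA. apply Hc. eauto. }
  set (y := coord x (pred d)).
  destruct (nat_unbounded (y * 8 ^ pred d)) as [M HM].
  destruct (build (fun n => Aset d n x) M Hinf (S (pred d))) as [ns [Hl [Hi Hd]]].
  destruct (small (pred d) (cx x) (map (fun n => 2 ^ n) ns)) as [a [Ha Hbig]].
  - reflexivity.
  - rewrite length_map. exact Hl.
  - apply decr_dbl; exact Hd.
  - intros a Ha. apply in_map_iff in Ha as [n [<- _]]. apply pow_lt; lra.
  - apply in_map_iff in Ha as [n [<- Hn']]. destruct (Hi n Hn') as [HMn HA].
    unfold Aset in HA. fold y in HA. unfold Q in HA.
    apply le_INR in HMn.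
    assert (H8 : 0 < 8 ^ pred d) by (apply pow_lt; lra).
    assert (Hq : 0 <= Rabs (G (cx x) (pred d) (2 ^ n))) by apply Rabs_pos.
    assert (H1 : (INR n + 1) * / 8 ^ pred d <= y).
    { eapply Rle_trans; [|exact HA]. apply Rmult_le_compat_l; [pose proof (pos_INR n); lra| exact Hbig]. }
    apply Rmult_le_compat_r with (r := 8 ^ pred d) in H1; [|lra].
    rewrite Rmult_assoc, Rinv_l in H1 by lra. lra.
Qed.

Lemma list_escape : forall d (P : list (point d)), exists N, forall x, In x P -> ~ Aset d N x.
Proof.
  intros d P. assert (forall P1 : list (point d), exists N, forall x, In x P1 -> forall n, (N <= n)%nat -> ~ Aset d n x).
  { intros P1. induction P1 as [|x P1 IH].
    - exists 0%nat. intros x [].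
    - destruct IH as [N HN]. destruct (point_escape d x) as [N' HN'].
      exists (Nat.max N N'). intros z [<-|Hz] n Hn.
      + apply HN'. lia.
      + apply (HN z Hz). lia. }
  destruct (H P) as [N HN]. exists N. intros x Hx. apply (HN x Hx). lia.
Qed.

Lemma A_pierce : forall d, piercing_infinite (Afam d).
Proof.
  intros d [P HP]. destruct (list_escape d P) as [N HN].
  destruct (HP (Aset d N) (ex_intro _ N eq_refl)) as [x [Hx HA]].
  exact (HN x Hx HA).
Qed.

End H4.

Lemma incl_firstn' : forall {T} n (l : list T), incl (firstn n l) l.
Proof. intros. rewrite <- (firstn_skipn n l) at 2. apply incl_appl, incl_refl. Qed.

Lemma pw_firstn : forall d n (L : list (rset d)), pw_distinct L -> pw_distinct (firstn n L).
Proof.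
  intros d n L. revert n. induction L as [|X L IH]; intros [|n] H; simpl; auto.
  destruct H as [HF HL]. split; [|apply IH; exact HL].
  apply Forall_forall. intros Y HY. rewrite Forall_forall in HF. apply HF. apply (incl_firstn' n L); exact HY.
Qed.

Lemma pw_app : forall d (M1 M2 : list (rset d)), pw_distinct M1 -> pw_distinct M2 ->
  (forall X Y, In X M1 -> In Y M2 -> ~ same_set X Y) -> pw_distinct (M1 ++ M2).
Proof.
  intros d M1 M2. induction M1 as [|X M1 IH]; simpl; intros H1 H2 Hx; auto.
  destruct H1 as [HF H1]. split.
  - apply Forall_app. split; [exact HF|]. apply Forall_forall. intros Y HY. apply Hx; auto.
  - apply IH; auto.
Qed.

Lemma split_AB : forall d (L : list (rset d)),
  Forall (setfam_union (Afam d) (Bfam d)) L -> pw_distinct L ->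
  exists LA LB, Forall (Afam d) LA /\ Forall (Bfam d) LB /\ pw_distinct LA /\ pw_distinct LB /\
    incl LA L /\ incl LB L /\ (length LA + length LB = length L)%nat.
Proof.
  intros d L. induction L as [|X L IH]; intros HF HP.
  - exists [], []. repeat split; simpl; auto; intros ? [].
  - inversion HF as [|? ? HX HL]; subst. destruct HP as [HXL HP].
    destruct (IH HL HP) as [LA [LB [HA [HB [PA [PB [IA [IB Hlen]]]]]]]].
    rewrite Forall_forall in HXL.
    destruct HX as [HX|HX].
    + exists (X :: LA), LB. repeat split.
      * constructor; auto.
      * exact HB.
      * apply Forall_forall. intros Y HY. apply HXL, IA, HY.
      * exact PA.
      * exact PB.
      * apply incl_cons. left; reflexivity. apply incl_tl, IA.
      * apply incl_tl, IB.
      * simpl. lia.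
    + exists LA, (X :: LB). repeat split.
      * exact HA.
      * constructor; auto.
      * exact PA.
      * apply Forall_forall. intros Y HY. apply HXL, IB, HY.
      * exact PB.
      * apply incl_tl, IA.
      * apply incl_cons. left; reflexivity. apply incl_tl, IB.
      * simpl. lia.
Qed.

Lemma pw_map_seq : forall d (f : nat -> rset d), (forall i j, (i < j)%nat -> ~ same_set (f i) (f j)) ->
  forall n a, pw_distinct (map f (seq a n)).
Proof.
  intros d f Hf n. induction n; intros a; simpl; auto. split; [|apply IHn].
  apply Forall_forall. intros Y HY. apply in_map_iff in HY as [j [<- Hj]]. apply in_seq in Hj.
  apply Hf. lia.
Qed.

Lemma Forall_incl' : forall {T} (P : T -> Prop) l l', incl l l' -> Forall P l' -> Forall P l.
Proof. intros. rewrite Forall_forall in *. auto. Qed.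

Theorem theorem2p1 (d : nat) (hd : (1 <= d)%nat) :
  exists A B : setfam d,
    infinite_family A /\ infinite_family B /\
    (forall S, A S -> is_closed S /\ is_convex S) /\
    (forall S, B S -> is_closed S /\ is_convex S /\ is_bounded S) /\
    piercing_infinite A /\
    forall k : nat, pq_property (d + 2 * k) (d + k) (setfam_union A B).
Proof.
  exists (Afam d), (Bfam d).
  assert (HAinf : forall n, members (Afam d) (map (Aset d) (seq 0 n)) /\ length (map (Aset d) (seq 0 n)) = n).
  { intros n. split; [split|].
    - apply Forall_forall. intros S HS. apply in_map_iff in HS as [j [<- _]]. exists j; reflexivity.
    - apply pw_map_seq. intros; apply A_ne; auto.
    - rewrite length_map, length_seq. reflexivity. }
  split; [intros n; exists (map (Aset d) (seq 0 n)); apply HAinf|].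
  split.
  { intros n. exists (map (Bset d) (seq 0 n)). split; [split|].
    - apply Forall_forall. intros S HS. apply in_map_iff in HS as [j [<- _]]. exists j; reflexivity.
    - apply pw_map_seq. intros; apply B_ne; auto.
    - rewrite length_map, length_seq. reflexivity. }
  split. { intros S [n ->]. split; [apply A_closed| apply A_convex]. }
  split. { intros S [k ->]. split; [apply B_closed| split; [apply B_convex| apply B_bounded]]. }
  split. { apply A_pierce. }
  intros k. split.
  { exists (map (Aset d) (seq 0 (d + 2 * k)%nat)). destruct (HAinf (d + 2 * k)%nat) as [[HF HP] Hl].
    split; [split|exact Hl]; [|exact HP].
    rewrite Forall_forall in *. intros S HS. left. apply HF, HS. }
  intros L [HF HP] Hl.
  destruct (split_AB d L HF HP) as [LA [LB [HA [HB [PA [PB [IA [IB Hlen]]]]]]]].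
  set (a := length LA) in *. set (b := length LB) in *.
  destruct (le_lt_dec (d + k)%nat a) as [Ha|Ha].
  { exists (firstn (d + k)%nat LA). split; [|split; [|split]].
    - eapply incl_tran; [apply incl_firstn'| exact IA].
    - apply pw_firstn; exact PA.
    - apply firstn_length_le; exact Ha.
    - apply (cp_A d); auto. eapply Forall_incl'; [apply incl_firstn'| exact HA]. }
  destruct (le_lt_dec (d + k)%nat b) as [Hb|Hb].
  { exists (firstn (d + k)%nat LB). split; [|split; [|split]].
    - eapply incl_tran; [apply incl_firstn'| exact IB].
    - apply pw_firstn; exact PB.
    - apply firstn_length_le; exact Hb.
    - apply (cp_B d). eapply Forall_incl'; [apply incl_firstn'| exact HB]. }
  exists (firstn (a - k)%nat LA ++ LB). split; [|split; [|split]].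
  - apply incl_app; [eapply incl_tran; [apply incl_firstn'| exact IA]| exact IB].
  - apply pw_app; [apply pw_firstn; exact PA| exact PB|].
    intros X Y HX HY. apply incl_firstn' in HX.
    rewrite Forall_forall in HA, HB. destruct (HA X HX) as [n ->]. destruct (HB Y HY) as [m ->].
    apply AB_ne; auto.
  - rewrite length_app, firstn_length_le by lia. lia.
  - apply cp_mix.
    + eapply Forall_incl'; [apply incl_firstn'| exact HA].
    + rewrite firstn_length_le by lia. lia.
    + exact HB.
Qed.
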